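(* Let $p$ be a prime, $n$ a positive integer, and for $j=0,\dots,p-1$ let $f_j:\mathbb{F}_p^n\to\mathbb{F}_p$ be bent functions. Then the bent function $F:\mathbb{F}_p^{n+2}\to\mathbb{F}_p$ defined by \[F(x,x_{n+1},y)=f_y(x)+x_{n+1}y\qquad(x\in\mathbb{F}_p^n,\ x_{n+1},y\in\mathbb{F}_p)\] is dual-bent if and only if $f_j$ is dual-bent for every $0\le j\le p-1$.
   Context: Here $f_y$ denotes $f_j$ for $j$ the element $y\in\mathbb{F}_p=\{0,\dots,p-1\}$. On $\mathbb{F}_p^N$ use the standard dot product. Walsh transform: $\widehat f(b)=\sum_{x\in\mathbb{F}_p^N}\epsilon_p^{f(x)-b\cdot x}$, $\epsilon_p=e^{2\pi i/p}$; $f$ is bent if $|\widehat f(b)|=p^{N/2}$ for all $b$. For bent $f$, $\widehat f(b)=\zeta_bp^{N/2}\epsilon_p^{f^*(b)}$ for some $\zeta_b\in\{\pm1,\pm i\}$ (for $p=2$, $\zeta_b=1$), defining the dual $f^*:\mathbb{F}_p^N\to\mathbb{F}_p$. A bent function is dual-bent if its dual is bent. *)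

(* Defs.v *)
From HB Require Import structures.
From mathcomp Require Import all_boot all_order all_algebra.
From mathcomp Require Import all_classical all_reals.
From mathcomp Require Import trigo.
From mathcomp Require Import complex.
Set Implicit Arguments. Unset Strict Implicit. Unset Printing Implicit Defensive.
Import Order.TTheory GRing.Theory Num.Theory.
Local Open Scope ring_scope.
Local Open Scope complex_scope.

Definition dotp (p N : nat) (b x : 'rV['F_p]_N) : 'F_p := \sum_(i < N) b 0 i * x 0 i.

Definition eps (R : realType) (p : nat) : complex R :=
  (cos (2 * pi / p%:R) +i* sin (2 * pi / p%:R))%C.

Definition walsh (R : realType) (p N : nat) (f : 'rV['F_p]_N -> 'F_p)
    (b : 'rV['F_p]_N) : complex R :=
  \sum_(x : 'rV['F_p]_N) eps R p ^+ (nat_of_ord (f x - dotp b x)).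

Definition bent (R : realType) (p N : nat) (f : 'rV['F_p]_N -> 'F_p) : Prop :=
  forall b, `|walsh R f b| = sqrtC (p%:R : complex R) ^+ N.

Definition is_dual (R : realType) (p N : nat) (f g : 'rV['F_p]_N -> 'F_p) : Prop :=
  forall b, exists zeta : complex R,
    (zeta \in [:: 1; -1; 'i; -'i]) /\ (p = 2%N -> zeta = 1) /\
    walsh R f b = zeta * sqrtC (p%:R : complex R) ^+ N * eps R p ^+ (nat_of_ord (g b)).

Definition dual_bent (R : realType) (p N : nat) (f : 'rV['F_p]_N -> 'F_p) : Prop :=
  bent R f /\ exists g, is_dual R f g /\ bent R g.

Definition glueF (p n : nat) (f : 'F_p -> 'rV['F_p]_n -> 'F_p)
    (v : 'rV['F_p]_(n + 2)) : 'F_p :=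
  let x := \row_(i < n) v 0 (lshift 2 i) in
  let xn1 := v 0 (rshift n (0 : 'I_2)) in
  let y := v 0 (rshift n (1 : 'I_2)) in
  f y x + xn1 * y.

(* Main.v *)
Require Import Defs.
From HB Require Import structures.
From mathcomp Require Import all_boot all_order all_algebra.
From mathcomp Require Import all_classical all_reals.
From mathcomp Require Import trigo.
From mathcomp Require Import complex.
Set Implicit Arguments. Unset Strict Implicit. Unset Printing Implicit Defensive.
Import Order.TTheory GRing.Theory Num.Theory.
Local Open Scope ring_scope.
Local Open Scope complex_scope.

Lemma cis_mul (R : realType) (a b : R) : ((cos a +i* sin a) * (cos b +i* sin b) = cos (a + b) +i* sin (a+b))%C.
Proof.
rewrite cosD sinD; apply/eqP; rewrite eq_complex /=; apply/andP; split; apply/eqP=> //.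
by rewrite addrC.
Qed.

Lemma cis_exp (R : realType) (a : R) m : ((cos a +i* sin a) ^+ m = cos (m%:R * a) +i* sin (m%:R * a))%C.
Proof.
elim: m => [|m IH]. rewrite expr0 (_ : 0%:R = 0 :> R) // mul0r cos0 sin0 //.
rewrite exprS IH cis_mul (mulrSr 1 m) mulrDl mul1r; congr (Complex (cos _) (sin _)); exact: addrC.
Qed.

Lemma eps_p (R : realType) (p : nat) : (0 < p)%N -> eps R p ^+ p = 1.
Proof.
move=> p0; rewrite /eps cis_exp mulrCA mulfV ?pnatr_eq0 -?lt0n // mulr1.
by rewrite mulr_natl cos2pi sin2pi.
Qed.

Lemma cos_lt1 (R : realType) (x : R) : 0 < x < pi *+ 2 -> cos x < 1.
Proof.
move=> /andP[x0 x2].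
have pi0 : 0 < pi :> R := pi_gt0 R.
case: (lerP x pi) => xpi.
  rewrite -cos0 ltr_cos ?in_itv /= ?lexx ?(ltW pi0) ?(ltW x0) //.
have -> : cos x = cos (pi *+ 2 - x).
  by rewrite -[RHS]cosN opprB -(cosD2pi (x - pi *+ 2)) subrK.
rewrite -cos0 ltr_cos ?in_itv /= ?lexx ?(ltW pi0) ?subr_gt0 //.
rewrite subr_ge0 (ltW x2) /=. rewrite lerBlDr mulr2n lerD2l ltW //.
Qed.

Lemma eps_neq1 (R : realType) (p m : nat) : (0 < m < p)%N -> eps R p ^+ m != 1.
Proof.
move=> /andP[m0 mp]; have p0 : (0 < p)%N by apply: ltn_trans mp.
rewrite /eps cis_exp; apply/negP => /eqP [] Hc _.
have pi0 : 0 < pi :> R := pi_gt0 R.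
have pR : 0 < p%:R :> R by rewrite ltr0n.
move: Hc; set th := (X in cos X = _) => Hc.
suff : cos th < 1 by rewrite Hc ltxx.
apply: cos_lt1; rewrite /th; apply/andP; split.
  by rewrite mulr_gt0 ?ltr0n // divr_gt0 // mulr_gt0.
rewrite mulrA ltr_pdivrMr // -[pi *+ 2]mulr_natl [X in _ < X]mulrC ltr_pM2r ?ltr_nat // mulr_gt0 // ltr0n.
Qed.


Definition ch (R : realType) (p : nat) (k : 'F_p) : complex R := eps R p ^+ (nat_of_ord k).

Lemma val_addFp (p : nat) (pp : prime p) (a b : 'F_p) :
  nat_of_ord (a + b) = ((nat_of_ord a + nat_of_ord b) %% p)%N.
Proof.
have -> : (a + b : 'F_p) = ((nat_of_ord a + nat_of_ord b)%N)%:R by rewrite natrD !natr_Zp.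
exact: val_Fp_nat.
Qed.

Lemma ch_add (R : realType) (p : nat) (pp : prime p) (a b : 'F_p) :
  ch R (a + b) = ch R a * ch R b.
Proof.
by rewrite /ch val_addFp // expr_mod ?exprD // eps_p // prime_gt0.
Qed.

Lemma ch0 (R : realType) (p : nat) : ch R (0 : 'F_p) = 1.
Proof. by rewrite /ch expr0. Qed.

Lemma ch_opp (R : realType) (p : nat) (pp : prime p) (a : 'F_p) :
  ch R (- a) * ch R a = 1.
Proof. by rewrite -ch_add // addNr ch0. Qed.

Lemma ch_norm (R : realType) (p : nat) (pp : prime p) (a : 'F_p) : `|ch R a| = 1.
Proof.
have h : `|eps R p| = 1.
  apply/eqP; rewrite -(pexpr_eq1 (prime_gt0 pp)) // -normrX eps_p ?prime_gt0 //.
  by rewrite normr1.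
by rewrite /ch normrX h expr1n.
Qed.

Lemma ch_eq1 (R : realType) (p : nat) (pp : prime p) (a : 'F_p) : ch R a = 1 -> a = 0.
Proof.
move=> h; apply/val_inj => /=; apply/eqP; rewrite eqn_leq leq0n andbT leqNgt.
apply/negP => a0; move: (eps_neq1 R (m:=a) (p:=p)); rewrite a0 /=.
have -> : (a < p)%N by rewrite -[X in (_ < X)%N](Fp_cast pp) ltn_ord.
by rewrite -/(ch R a) h eqxx => /(_ isT).
Qed.

Lemma ch_inj (R : realType) (p : nat) (pp : prime p) (a b : 'F_p) : ch R a = ch R b -> a = b.
Proof.
move=> h; apply/eqP; rewrite -subr_eq0; apply/eqP; apply: (@ch_eq1 R _ pp).
by rewrite ch_add // h mulrC ch_opp.
Qed.

Lemma sum_ch (R : realType) (p : nat) (pp : prime p) :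
  \sum_(u : 'F_p) ch R u = 0.
Proof.
have -> : \sum_(u : 'F_p) ch R u = \sum_(i < (Zp_trunc (pdiv p)).+2) eps R p ^+ i by [].
rewrite -(big_mkord xpredT (fun i => eps R p ^+ i)) Fp_cast // big_mkord.
have : (eps R p - 1) * \sum_(i < p) eps R p ^+ i = 0 by rewrite -subrX1 eps_p ?prime_gt0 // subrr.
have w1 : eps R p != 1.
  by have := eps_neq1 R (p:=p) (m:=1); rewrite expr1 prime_gt1 //; apply.
by move/eqP; rewrite mulf_eq0 subr_eq0 (negbTE w1) /= => /eqP.
Qed.

Lemma orth (R : realType) (p : nat) (pp : prime p) (t : 'F_p) :
  \sum_(u : 'F_p) ch R (u * t) = if t == 0 then p%:R else 0.
Proof.
case: eqP => [->|/eqP tn0].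
  under eq_bigr do rewrite mulr0 ch0.
  by rewrite sumr_const card_Fp.
transitivity (\sum_(u : 'F_p) ch R u); last exact: sum_ch.
symmetry; exact: (reindex_inj (mulIf tn0)).
Qed.


Definition cx (p n : nat) (v : 'rV['F_p]_(n + 2)) : 'rV['F_p]_n := \row_(i < n) v 0 (lshift 2 i).
Definition cu (p n : nat) (v : 'rV['F_p]_(n + 2)) : 'F_p := v 0 (rshift n (0 : 'I_2)).
Definition cy (p n : nat) (v : 'rV['F_p]_(n + 2)) : 'F_p := v 0 (rshift n (1 : 'I_2)).
Definition gl3 (p n : nat) (x : 'rV['F_p]_n) (u y : 'F_p) : 'rV['F_p]_(n + 2) :=
  \row_(i < n + 2) match fintype.split i with inl k => x 0 k | inr j => if j == 0 then u else y end.

Lemma cx_glue p n x u y : cx (@gl3 p n x u y) = x.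
Proof. by apply/rowP => k; rewrite !mxE (unsplitK (inl k)). Qed.
Lemma cu_glue p n x u y : cu (@gl3 p n x u y) = u.
Proof. by rewrite /cu mxE (unsplitK (inr (0 : 'I_2))). Qed.
Lemma cy_glue p n x u y : cy (@gl3 p n x u y) = y.
Proof. by rewrite /cy mxE (unsplitK (inr (1 : 'I_2))). Qed.

Lemma glueK p n (v : 'rV['F_p]_(n + 2)) : gl3 (cx v) (cu v) (cy v) = v.
Proof.
apply/rowP => i; rewrite mxE; case: split_ordP => [k ->|j ->]; first by rewrite mxE.
rewrite /cu /cy; case: eqP => [->//|/eqP j0].
congr (v 0 (rshift n _)); apply/val_inj => /=.
by case: j j0 => [[|[|m]] //= Hm] _.
Qed.

Lemma sum_glue p n (V : nmodType) (G : 'rV['F_p]_(n + 2) -> V) :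
  \sum_(v : 'rV['F_p]_(n + 2)) G v = \sum_x \sum_u \sum_y G (@gl3 p n x u y).
Proof.
rewrite (reindex (fun t : 'rV['F_p]_n * ('F_p * 'F_p) => gl3 t.1 t.2.1 t.2.2)) /=.
  under [RHS]eq_bigr do rewrite pair_bigA.
  by rewrite pair_bigA.
exists (fun v => (cx v, (cu v, cy v))).
  by move=> [x [u y]] _; rewrite cx_glue cu_glue cy_glue.
by move=> v _; exact: glueK.
Qed.

Lemma dotp_glue p n (b v : 'rV['F_p]_(n + 2)) :
  dotp b v = dotp (cx b) (cx v) + cu b * cu v + cy b * cy v.
Proof.
rewrite /dotp big_split_ord /= !big_ord_recl big_ord0 addr0 addrA.
congr (_ + _ + _); first by apply: eq_bigr => i _; rewrite !mxE.
by rewrite /cy; congr (b 0 _ * v 0 _); apply/val_inj.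
Qed.

Lemma glueF_glue p n (f : 'F_p -> 'rV['F_p]_n -> 'F_p) x u y :
  glueF f (gl3 x u y) = f y x + u * y.
Proof. by rewrite /glueF -/(cx _) -/(cu _) -/(cy _) cx_glue cu_glue cy_glue. Qed.

From mathcomp Require Import ring.

Lemma walshE (R : realType) p N (f : 'rV['F_p]_N -> 'F_p) b :
  walsh R f b = \sum_x ch R (f x - dotp b x).
Proof. by rewrite /walsh /ch. Qed.

Lemma sum_delta (R : realType) p (pp : prime p) (A : 'F_p -> complex R) (c : 'F_p) :
  \sum_y A y * \sum_u ch R (u * (y - c)) = p%:R * A c.
Proof.
under eq_bigr do rewrite orth //.
rewrite (bigD1 c) // subrr eqxx big1 ?addr0; first by rewrite /= mulrC addr0.
by move=> y /= yc; rewrite subr_eq0 (negbTE yc) mulr0.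
Qed.
Lemma ex1 p (a d bu by' u y : 'F_p) : a + u*y - (d + bu*u + by'*y) = a - d - by'*y + u*(y - bu).
Proof. ring. Qed.
Lemma ex2 p (a d c : 'F_p) : a - d - c = - c + (a - d).
Proof. ring. Qed.

Lemma walsh_F (R : realType) p n (pp : prime p) (f : 'F_p -> 'rV['F_p]_n -> 'F_p) b :
  walsh R (glueF f) b = p%:R * ch R (- (cy b * cu b)) * walsh R (f (cu b)) (cx b).
Proof.
rewrite walshE sum_glue.
transitivity (\sum_x \sum_y ch R (f y x - dotp (cx b) x - cy b * y) *
               \sum_u ch R (u * (y - cu b))).
  apply: eq_bigr => x _; rewrite exchange_big; apply: eq_bigr => y _.
  rewrite mulr_sumr; apply: eq_bigr => u _.
  rewrite glueF_glue dotp_glue cx_glue cu_glue cy_glue -(ch_add R pp); congr (ch R _).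
  exact: ex1.
under eq_bigr => x _ do rewrite (@sum_delta R p pp).
rewrite walshE -mulr_sumr -mulrA; congr (_ * _); rewrite mulr_sumr; apply: eq_bigr => x _.
by rewrite -(ch_add R pp); congr (ch R _); apply: ex2.
Qed.

Lemma sum_delta' (R : realType) p (pp : prime p) (A : 'F_p -> complex R) (c : 'F_p) :
  \sum_y A y * \sum_u ch R ((- u) * (y - c)) = p%:R * A c.
Proof.
rewrite -(@sum_delta R p pp); apply: eq_bigr => y _; congr (_ * _).
symmetry; exact: (reindex_inj (@oppr_inj _)).
Qed.

Definition dualF p n (g : 'F_p -> 'rV['F_p]_n -> 'F_p) (v : 'rV['F_p]_(n + 2)) : 'F_p :=
  g (cu v) (cx v) - cy v * cu v.

Lemma ex3 p (a d bu by' u y : 'F_p) : a - y * u - (d + bu*u + by'*y) = a - d - bu * u + (- y) * (u - - by').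
Proof. ring. Qed.
Lemma ex4 p (a d bu by' : 'F_p) : a - d - bu * - by' = bu * by' + (a - d).
Proof. ring. Qed.

Lemma walsh_D (R : realType) p n (pp : prime p) (g : 'F_p -> 'rV['F_p]_n -> 'F_p) b :
  walsh R (dualF g) b = p%:R * ch R (cu b * cy b) * walsh R (g (- cy b)) (cx b).
Proof.
rewrite walshE sum_glue.
transitivity (\sum_x \sum_u ch R (g u x - dotp (cx b) x - cu b * u) *
               \sum_y ch R ((- y) * (u - - cy b))).
  apply: eq_bigr => x _; apply: eq_bigr => u _.
  rewrite mulr_sumr; apply: eq_bigr => y _.
  rewrite /dualF dotp_glue cx_glue cu_glue cy_glue -(ch_add R pp); congr (ch R _).
  exact: ex3.
under eq_bigr => x _ do rewrite (@sum_delta' R p pp).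
rewrite walshE -mulr_sumr -mulrA; congr (_ * _); rewrite mulr_sumr; apply: eq_bigr => x _.
by rewrite -(ch_add R pp); congr (ch R _); apply: ex4.
Qed.
Lemma ch_mulrn (R : realType) p (pp : prime p) (a : 'F_p) k : ch R (a *+ k) = ch R a ^+ k.
Proof.
elim: k => [|k IH]; first by rewrite mulr0n expr0 ch0.
by rewrite mulrS exprS (ch_add R pp) IH.
Qed.

Lemma zeta4 (R : realType) (z : complex R) : z \in [:: 1; -1; 'i; -'i] -> z ^+ 4 = 1.
Proof.
have i2 : ('i : complex R) ^+ 2 = -1.
  rewrite expr2; apply/eqP; rewrite eq_complex /=; apply/andP; split; apply/eqP; ring.
have e4 : forall w : complex R, w ^+ 4 = (w ^+ 2) ^+ 2 by move=> w; rewrite -exprM.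
rewrite !inE => /or4P [] /eqP ->; rewrite e4 ?sqrrN ?i2 ?expr1n ?sqrrN ?expr1n //.
Qed.

Lemma two_neq0 p (pp : prime p) : p != 2%N -> (2%:R : 'F_p) != 0.
Proof.
move=> p2; have p3 : (2 < p)%N by rewrite ltn_neqAle eq_sym p2 prime_gt1.
by apply/eqP => /(congr1 (@nat_of_ord _)); rewrite val_Fp_nat // modn_small.
Qed.

Lemma uniq_rep (R : realType) p (pp : prime p) (z z' : complex R) (a b : 'F_p) :
  z \in [:: 1; -1; 'i; -'i] -> (p = 2%N -> z = 1) ->
  z' \in [:: 1; -1; 'i; -'i] -> (p = 2%N -> z' = 1) ->
  z * ch R a = z' * ch R b -> a = b.
Proof.
move=> zl z2 zl' z2' h.
case: (eqVneq p 2%N) => [p2|p2].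
  by apply: (@ch_inj R p pp); move: h; rewrite z2 // z2' // !mul1r.
have h4 := congr1 (fun w => w ^+ 4) h; rewrite /= !exprMn (zeta4 zl) (zeta4 zl') !mul1r in h4.
rewrite -!(ch_mulrn R pp) in h4; move/(@ch_inj R p pp)/eqP: h4.
rewrite -subr_eq0 -mulrnBl -mulr_natr mulf_eq0 => /orP [|].
  by rewrite subr_eq0 => /eqP.
rewrite (_ : 4%:R = 2%:R * 2%:R :> 'F_p); last by rewrite -natrM.
by rewrite mulf_eq0 orbb (negbTE (two_neq0 pp p2)).
Qed.

Lemma bent_glueF (R : realType) p n (pp : prime p) (f : 'F_p -> 'rV['F_p]_n -> 'F_p) :
  (forall j, bent R (f j)) -> bent R (glueF f).
Proof.
move=> hb b; rewrite walsh_F // !normrM normr_nat (ch_norm R pp) mulr1 hb.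
by rewrite exprD sqrtCK mulrC.
Qed.

Lemma bent_dualF (R : realType) p n (pp : prime p) (g : 'F_p -> 'rV['F_p]_n -> 'F_p) :
  (forall j, bent R (g j)) -> bent R (dualF g).
Proof.
move=> hb b; rewrite walsh_D // !normrM normr_nat (ch_norm R pp) mulr1 hb.
by rewrite exprD sqrtCK mulrC.
Qed.

Theorem theorem3 (R : realType) (p n : nat) (f : 'F_p -> 'rV['F_p]_n -> 'F_p) :
  prime p -> (0 < n)%N -> (forall j, bent R (f j)) ->
  (dual_bent R (glueF f) <-> forall j, dual_bent R (f j)).
Proof.
move=> pp _ hb.
set s := sqrtC (p%:R : complex R).
have sP : s ^+ (n + 2) = p%:R * s ^+ n by rewrite exprD sqrtCK mulrC.
have hp0 : (p%:R : complex R) != 0 by rewrite pnatr_eq0 -lt0n prime_gt0.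
have s1 : s != 0.
  by apply: contraNneq hp0 => e; rewrite -[p%:R]sqrtCK -/s e expr0n.
have s0 : s ^+ n != 0 by rewrite expf_neq0.
split.
- move=> [_ [G [HG bG]]] j; split; first exact: hb.
  pose g (u : 'F_p) (a : 'rV['F_p]_n) := G (gl3 a u 0).
  have key : forall u a, exists z : complex R, z \in [:: 1; -1; 'i; -'i] /\ (p = 2%N -> z = 1) /\
      walsh R (f u) a = z * s ^+ n * ch R (g u a).
    move=> u a; have [z [zl [z2 e]]] := HG (gl3 a u 0).
    exists z; split => //; split => //.
    rewrite -/(ch R _) walsh_F // cu_glue cy_glue cx_glue mul0r oppr0 ch0 mulr1 sP in e.
    apply: (mulfI hp0); rewrite e /g -/s; ring.
  have Gform : forall v, G v = dualF g v.
    move=> v; have [z [zl [z2 e]]] := HG v; have [z' [zl' [z2' e']]] := key (cu v) (cx v).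
    rewrite -/(ch R _) in e.
    apply: (uniq_rep pp zl z2 zl' z2').
    apply: (mulIf (mulf_neq0 hp0 s0)).
    transitivity (walsh R (glueF f) v); first by rewrite e sP; ring.
    rewrite walsh_F // e' /dualF (ch_add R pp) -/s; ring.
  exists (g j); split.
    move=> a; have [z [zl [z2 e]]] := key j a; exists z; split => //.
  move=> a; have := bG (gl3 a 0 (- j)).
  have -> : walsh R G (gl3 a 0 (- j)) = walsh R (dualF g) (gl3 a 0 (- j)).
    by rewrite !walshE; apply: eq_bigr => v _; rewrite Gform.
  rewrite walsh_D // cu_glue cy_glue cx_glue opprK mul0r ch0 mulr1 normrM normr_nat sP.
  by move/(mulfI hp0).
- move=> H.
  have [g Hg] := choice (fun j => (H j).2).
  split; first exact: bent_glueF.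
  exists (dualF g); split; last by apply: bent_dualF => // j; case: (Hg j).
  move=> b; have [z [zl [z2 ew]]] := (Hg (cu b)).1 (cx b).
  exists z; split => //; split => //.
  rewrite -/(ch R (dualF g b)) -/(ch R (g (cu b) (cx b))) in ew *.
  rewrite walsh_F // ew sP /dualF (ch_add R pp) -/s.
  ring.
Qed.
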